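(* Let $N\ge1$ and $n\ge1$ be integers, $\phi>0$, $L>0$, and $0<\eta_0\le\eta_1\le\dots\le\eta_N$. For $t\in[N]$ let $a_t\in\mathbb{R}^n$ with $\|a_t\|_2\le L$, and for $t\in\{0,1,\dots,N\}$ define $A_t=\eta_tI+\phi\sum_{\tau=1}^{t}a_\tau a_\tau^\top$. Let $d_1,\dots,d_N\in\{0,1,2,\dots\}$ be delays, $m_t=\{\tau\in[t-1]:\tau+d_\tau\ge t\}$, and $d_{\max}^{\le N}=\max_{\tau\le N}\min\{d_\tau,N-\tau\}$. Then $$\sum_{t=1}^N\|a_t\|_{A_{t-1}^{-1}}\left(\sum_{\tau\in m_t}\|a_\tau\|_{A_{t-1}^{-1}}\right)\le\frac{2n\,d_{\max}^{\le N}}{\phi}\left(\frac{\phi L^2}{\eta_0}+1\right)\ln\left(1+\frac{\phi L^2N}{\eta_0 n}\right),$$ and $$\sum_{t=1}^N\|a_t\|_{A_t^{-1}}\left(\sum_{\tau\in m_t}\|a_\tau\|_{A_t^{-1}}\right)\le\frac{2n\,d_{\max}^{\le N}}{\phi}\ln\left(1+\frac{\phi L^2N}{\eta_0 n}\right).$$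
   Context: For a positive definite matrix $A$ and $x\in\mathbb{R}^n$, $\|x\|_{A^{-1}}=\sqrt{x^\top A^{-1}x}$. $[t-1]=\{1,\dots,t-1\}$. *)

(* Defs.v *)
From HB Require Import structures.
From mathcomp Require Import all_boot all_order all_algebra.
From mathcomp Require Import reals exp.
Set Implicit Arguments. Unset Strict Implicit. Unset Printing Implicit Defensive.
Import Order.TTheory GRing.Theory Num.Theory.
Local Open Scope ring_scope.

Definition norm2 (R : realType) (n : nat) (x : 'cV[R]_n) : R :=
  Num.sqrt (\sum_(i < n) x i 0 ^+ 2).

Definition wnorm_inv (R : realType) (n : nat) (A : 'M[R]_n) (x : 'cV[R]_n) : R :=
  Num.sqrt ((x^T *m invmx A *m x) 0 0).

Definition Amat (R : realType) (n : nat) (eta : nat -> R) (phi : R)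
  (a : nat -> 'cV[R]_n) (t : nat) : 'M[R]_n :=
  eta t *: 1%:M + phi *: \sum_(1 <= tau < t.+1) (a tau *m (a tau)^T).

Definition dmaxN (d : nat -> nat) (N : nat) : nat :=
  (\max_(1 <= tau < N.+1) minn (d tau) (N - tau))%N.

Definition sum_mt (R : realType) (d : nat -> nat) (t : nat) (f : nat -> R) : R :=
  \sum_(1 <= tau < t | (t <= tau + d tau)%N) f tau.

(* Main.v *)
Require Import Defs.
From HB Require Import structures.
From mathcomp Require Import all_boot all_order all_algebra.
From mathcomp Require Import reals exp.
From mathcomp Require Import ring lra zify.
Import Order.TTheory GRing.Theory Num.Theory.
Local Open Scope ring_scope.

Set Implicit Arguments. Unset Strict Implicit. Unset Printing Implicit Defensive.

Definition qf (R : realType) (n : nat) (M : 'M[R]_n) (x : 'cV[R]_n) : R :=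
  (x^T *m M *m x) 0 0.

Lemma tr11 (R : realType) (M : 'M[R]_1) : M 0 0 = M^T 0 0.
Proof. by rewrite mxE. Qed.

Lemma dotC (R : realType) n (x y : 'cV[R]_n) : (x^T *m y) 0 0 = (y^T *m x) 0 0.
Proof. by rewrite tr11 trmx_mul trmxK. Qed.

Lemma qfD (R : realType) n (A B : 'M[R]_n) x : qf (A + B) x = qf A x + qf B x.
Proof. by rewrite /qf mulmxDr mulmxDl mxE. Qed.

Lemma qfN (R : realType) n (A : 'M[R]_n) x : qf (- A) x = - qf A x.
Proof. by rewrite /qf mulmxN mulNmx mxE. Qed.

Lemma qfB (R : realType) n (A B : 'M[R]_n) x : qf (A - B) x = qf A x - qf B x.
Proof. by rewrite qfD qfN. Qed.

Lemma qfZ (R : realType) n (A : 'M[R]_n) k x : qf (k *: A) x = k * qf A x.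
Proof. by rewrite /qf -scalemxAr -scalemxAl mxE. Qed.

Lemma qf_sum (R : realType) n (I : Type) (r : seq I) (P : pred I) (F : I -> 'M[R]_n) x :
  qf (\sum_(i <- r | P i) F i) x = \sum_(i <- r | P i) qf (F i) x.
Proof.
elim/big_rec2: _ => [|i y M _ <-]; first by rewrite /qf mulmx0 mul0mx mxE.
by rewrite qfD.
Qed.

Lemma qf1 (R : realType) n (x : 'cV[R]_n) : qf 1%:M x = \sum_i x i 0 ^+ 2.
Proof.
rewrite /qf mulmx1 mxE; apply: eq_bigr => i _; by rewrite mxE expr2.
Qed.

Lemma qf_outer (R : realType) n (a x : 'cV[R]_n) :
  qf (a *m a^T) x = ((a^T *m x) 0 0) ^+ 2.
Proof.
rewrite /qf !mulmxA -(mulmxA _ a^T) mxE big_ord1 (dotC x a) expr2.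
by [].
Qed.

Definition pd (R : realType) n (M : 'M[R]_n) := forall x, x != 0 -> 0 < qf M x.

Lemma qf0 (R : realType) n (M : 'M[R]_n) : qf M 0 = 0.
Proof. by rewrite /qf mulmx0 mxE. Qed.

Lemma pd_psd (R : realType) n (M : 'M[R]_n) x : pd M -> 0 <= qf M x.
Proof. move=> H; have [->|/H/ltW//] := eqVneq x 0; by rewrite qf0. Qed.

Lemma pd_det_step (R : realType) n (M : 'M[R]_(1 + n)) :
  M^T = M -> pd M ->
  (forall M' : 'M[R]_n, M'^T = M' -> pd M' -> 0 < \det M' /\ \det M' <= \prod_i M' i i) ->
  0 < \det M /\ \det M <= \prod_i M i i.
Proof.
move=> sM pM IH.
set b := ulsubmx M; set w := ursubmx M; set c := dlsubmx M; set M' := drsubmx M.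
have ewc : w = c^T by rewrite /w /c trmx_dlsub sM.
have sM' : M'^T = M' by rewrite /M' trmx_drsub sM.
have eM : M = block_mx b w c M' by rewrite submxK.
have pM' : pd M'.
  move=> x' x'0; have := pM (col_mx 0 x').
  rewrite col_mx_eq0 eqxx /= => /(_ x'0).
  by rewrite /qf {1}eM tr_col_mx mul_row_block mul_row_col trmx0 !mul0mx !add0r mulmx0 add0r.
have [dM'0 dM'le] := IH M' sM' pM'.
have uM' : M' \in unitmx by rewrite unitmxE unitfE gt_eqF.
set z := invmx M' *m c.
set s := b - w *m z.
have eM2 : M = block_mx 1%:M (w *m invmx M') 0 1%:M *m block_mx s 0 c M'.
  rewrite mulmx_block ?mul1mx ?mul0mx ?mulmx0 ?add0r ?addr0.
  by rewrite -mulmxA -/z subrK mulmxKV // {1}eM.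
have dM : \det M = s 0 0 * \det M'.
  by rewrite {1}eM2 det_mulmx det_ublock det_lblock !det1 !mul1r det_mx11.
have Mz : M' *m z = c by rewrite /z mulKVmx.
have s0 : 0 < s 0 0.
  have x0 : col_mx (1%:M : 'M[R]_1) (- z) != 0.
    apply/negP => /eqP H; have := congr1 (fun X : 'cV[R]_(1 + n) => X (lshift n (0 : 'I_1)) 0) H.
    by rewrite col_mxEu !mxE /= => /eqP; rewrite oner_eq0.
  have := pM _ x0; rewrite /qf -mulmxA eM mul_block_col !mulmx1 !mulmxN Mz subrr -/s.
  rewrite tr_col_mx mul_row_col mulmx0 addr0 trmx1 mul1mx; done.
have wz0 : 0 <= (w *m z) 0 0.
  have := pd_psd z pM'; rewrite /qf -mulmxA Mz ewc dotC; done.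
have es : s 0 0 = b 0 0 - (w *m z) 0 0 by rewrite /s !mxE.
have sb : s 0 0 <= b 0 0 by rewrite es lerBlDr lerDl.
split; first by rewrite dM mulr_gt0.
rewrite dM -[\prod_(i < 1 + n) M i i]/(\prod_(i < 1 + n) M i i).
rewrite big_split_ord big_ord1 /=.

apply: ler_pM.
- exact: (ltW s0).
- exact: (ltW dM'0).
- move: sb; rewrite /b /ulsubmx /lsubmx /usubmx !mxE. done.
apply: (le_trans dM'le); rewrite le_eqVlt; apply/orP; left; apply/eqP.
by apply: eq_bigr => i _; rewrite /M' !mxE.
Qed.

Lemma pd_det (R : realType) n (M : 'M[R]_n) :
  M^T = M -> pd M -> 0 < \det M /\ \det M <= \prod_i M i i.
Proof.
elim: n M => [|n IH] M sM pM.
  by rewrite det_mx00 big_ord0; split; [exact: ltr01|exact: lexx].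
exact: (pd_det_step sM pM IH).
Qed.

Lemma det_rank1 (R : realType) n (u v : 'cV[R]_n) :
  \det (1%:M + u *m v^T) = 1 + (v^T *m u) 0 0.
Proof.
pose X : 'M[R]_(1 + n) := block_mx 1%:M (- v^T) u 1%:M.
have E1 : X = block_mx 1%:M 0 u 1%:M *m block_mx 1%:M (- v^T) 0 (1%:M + u *m v^T).
  rewrite mulmx_block /X ?mul1mx ?mul0mx ?mulmx1 ?mulmx0 ?addr0 ?add0r.
  by rewrite mulmxN (addrC 1%:M) addKr.
have E2 : X = block_mx 1%:M (- v^T) 0 1%:M *m block_mx (1%:M + v^T *m u) 0 u 1%:M.
  rewrite mulmx_block /X ?mul1mx ?mul0mx ?mulmx1 ?mulmx0 ?addr0 ?add0r.
  by rewrite mulNmx addrK.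
have := E2; rewrite E1 => /(congr1 determinant).
rewrite !det_mulmx det_lblock det_ublock det_ublock det_lblock !det1 !mul1r !mulr1.
by move=> ->; rewrite det_mx11 mxE mxE.
Qed.

Definition qinv (R : realType) n (B : 'M[R]_n) (x : 'cV[R]_n) : R :=
  (x^T *m invmx B *m x) 0 0.

Lemma det_update (R : realType) n (B : 'M[R]_n) (a : 'cV[R]_n) k :
  B \in unitmx -> \det (B + k *: (a *m a^T)) = \det B * (1 + k * qinv B a).
Proof.
move=> uB.
have -> : B + k *: (a *m a^T) = B *m (1%:M + (k *: (invmx B *m a)) *m a^T).
  by rewrite mulmxDr mulmx1 -scalemxAl -scalemxAr !mulmxA mulmxV // mul1mx.
rewrite det_mulmx det_rank1 /qinv -scalemxAr mxE mulmxA; done.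
Qed.

Lemma mxsubE (R : realType) m n (A B : 'M[R]_(m, n)) i j : (A - B) i j = A i j - B i j.
Proof. by rewrite !mxE. Qed.

Lemma qinv_qf (R : realType) n (B : 'M[R]_n) x :
  B \in unitmx -> qinv B x = qf B (invmx B *m x).
Proof.
move=> uB; rewrite /qinv /qf -mulmxA dotC -mulmxA mulKVmx //.
Qed.

Lemma qinv_ge0 (R : realType) n (B : 'M[R]_n) x :
  B \in unitmx -> (forall y, 0 <= qf B y) -> 0 <= qinv B x.
Proof. by move=> uB H; rewrite qinv_qf. Qed.

Lemma qinv_mono (R : realType) n (A B : 'M[R]_n) x :
  B^T = B -> B \in unitmx -> A \in unitmx -> (forall y, 0 <= qf B y) ->
  (forall y, qf B y <= qf A y) -> qinv A x <= qinv B x.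
Proof.
move=> sB uB uA pB AB.
set y := invmx A *m x; set z := invmx B *m x.
have Ay : A *m y = x by rewrite /y mulKVmx.
have Bz : B *m z = x by rewrite /z mulKVmx.
have eY : qinv A x = (y^T *m x) 0 0 by rewrite /qinv -mulmxA dotC.
have eZ : (y^T *m B *m z) 0 0 = qinv A x by rewrite -mulmxA Bz eY.
have eZ2 : qinv B x = qf B z by rewrite /qf -mulmxA Bz /qinv -mulmxA dotC.
have qA : qf A y = (y^T *m x) 0 0 by rewrite /qf -mulmxA Ay.
have eZy : (z^T *m B *m y) 0 0 = (y^T *m B *m z) 0 0.
  by rewrite tr11 trmx_mul (trmx_mul z^T B) trmxK sB mulmxA.
have tB : (y - z)^T = y^T - z^T by apply/matrixP => i j; rewrite !mxE.
have := pB (y - z); rewrite /qf tB !mulmxBl !mulmxBr !mxsubE.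
rewrite eZy eZ.
have e3 : (z^T *m B *m z) 0 0 = qinv B x by rewrite eZ2.
rewrite e3.
have := AB y; rewrite qA -eY /qf.
move: (qinv A x) (qinv B x) ((y^T *m B *m y) 0 0) => p q r.
lra.
Qed.

Lemma count_le (lo hi a D : nat) (P : pred nat) :
  (forall i, lo <= i < hi -> P i -> a <= i < a + D)%N ->
  (\sum_(lo <= i < hi | P i) 1 <= minn hi (a + D) - a)%N.
Proof.
elim: hi => [|hi IH] HP; first by rewrite big_geq.
have {}IH := IH ltac:(move=> i Hi; apply: HP; lia).
case: (leqP lo hi) => Hlo; last by rewrite big_geq.
rewrite big_mkcond big_nat_recr //= -big_mkcond.
set s := (X in (X + _ <= _)%N).
have IH' : (s <= minn hi (a + D) - a)%N := IH.
case: (boolP (P hi)) => Ph.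
  by move: (HP hi ltac:(lia) Ph) IH'; lia.
by move: IH'; lia.
Qed.

Lemma count_leD (R : realType) (lo hi a D : nat) (P : pred nat) :
  (forall i, lo <= i < hi -> P i -> a <= i < a + D)%N ->
  \sum_(lo <= i < hi | P i) (1 : R) <= D%:R.
Proof.
move=> HP; have := count_le HP => H.
rewrite -(natr_sum _ _ _ (fun _ => 1%N)) ler_nat; lia.
Qed.

Lemma sum_if_le (R : realType) (c : R) (P : pred nat) lo hi a D :
  0 <= c -> (forall i, lo <= i < hi -> P i -> a <= i < a + D)%N ->
  \sum_(lo <= i < hi) (if P i then c else 0) <= c * D%:R.
Proof.
move=> c0 HP; rewrite -big_mkcond /=.
rewrite (eq_bigr (fun _ => c * 1)); last by move=> i _; rewrite mulr1.
rewrite -mulr_sumr; apply: ler_wpM2l => //; exact: count_leD HP.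
Qed.

Lemma comb (R : realType) (N : nat) (d : nat -> nat) (D : nat) (u : nat -> R)
  (v : nat -> nat -> R) (p : nat -> R) :
 (forall tau, (1 <= tau <= N)%N -> (minn (d tau) (N - tau) <= D)%N) ->
 (forall t, (1 <= t <= N)%N -> 0 <= u t /\ u t ^+ 2 <= p t) ->
 (forall t tau, (1 <= tau)%N -> (tau < t)%N -> (t <= N)%N -> 0 <= v t tau /\ v t tau ^+ 2 <= p tau) ->
 (forall t, 0 <= p t) ->
 \sum_(1 <= t < N.+1) u t * (\sum_(1 <= tau < t | (t <= tau + d tau)%N) v t tau)
   <= D%:R * \sum_(1 <= t < N.+1) p t.
Proof.
move=> hD Hu Hv Hp.
pose C := fun t tau => ((tau < t) && (t <= tau + d tau))%N.
apply: (@le_trans _ _ (\sum_(1 <= t < N.+1) \sum_(1 <= tau < N.+1)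
   ((if C t tau then p t / 2 else 0) + (if C t tau then p tau / 2 else 0)))).
  apply: ler_sum_nat => t /andP[t1 tN].
  rewrite mulr_sumr (big_nat_widen _ _ _ _ _ (ltnW tN)) big_mkcond /=.
  apply: ler_sum_nat => tau /andP[tau1 tauN].
  rewrite /C; case Hc: (t <= tau + d tau)%N; case Hl: (tau < t)%N => /=; rewrite ?mulr0 ?addr0 //.
  have [u0 u2] := Hu t ltac:(lia).
  have [v0 v2] := Hv t tau tau1 Hl ltac:(lia).
  have h := sqr_ge0 (u t - v t tau); move: h; rewrite sqrrB mulr2n; lra.
rewrite (eq_bigr (fun t => \sum_(1 <= tau < N.+1) (if C t tau then p t / 2 else 0) +
     \sum_(1 <= tau < N.+1) (if C t tau then p tau / 2 else 0))); last first.
  by move=> t _; rewrite big_split.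
rewrite big_split /= [X in _ + X <= _]exchange_big_nat /=.
apply: (@le_trans _ _ (\sum_(1 <= t < N.+1) (p t / 2 * D%:R) + \sum_(1 <= t < N.+1) (p t / 2 * D%:R))).
  apply: lerD; apply: ler_sum_nat => t /andP[t1 tN].
    apply: (@sum_if_le _ (p t / 2) (C t) _ _ (t - D) D); first by have := Hp t; lra.
    move=> i Hi; rewrite /C => /andP[it iD].
    have := hD i; lia.
  apply: (@sum_if_le _ (p t / 2) (fun i => C i t) _ _ t.+1 D); first by have := Hp t; lra.
  move=> i Hi; rewrite /C => /andP[it iD].
  have := hD t; lia.
rewrite -big_split /= mulr_sumr; apply: ler_sum_nat => t _.
by rewrite -mulrDl -splitr mulrC.
Qed.

Definition Sm (R : realType) n (a : nat -> 'cV[R]_n) t :=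
  \sum_(1 <= tau < t.+1) (a tau *m (a tau)^T).
Definition Bm (R : realType) n (e phi : R) (a : nat -> 'cV[R]_n) t :=
  e *: 1%:M + phi *: Sm a t.

Lemma Amat_E (R : realType) n (eta : nat -> R) phi (a : nat -> 'cV[R]_n) t :
  Amat eta phi a t = Bm (eta t) phi a t.
Proof. by []. Qed.

Lemma qf_Bm (R : realType) n (e phi : R) (a : nat -> 'cV[R]_n) t x :
  qf (Bm e phi a t) x = e * \sum_i x i 0 ^+ 2 +
     phi * \sum_(1 <= tau < t.+1) ((a tau)^T *m x) 0 0 ^+ 2.
Proof.
rewrite /Bm qfD !qfZ qf1 /Sm qf_sum; congr (_ + _ * _).
by apply: eq_bigr => i _; rewrite qf_outer.
Qed.

Lemma qf_Bm_mono (R : realType) n (e1 e2 phi : R) (a : nat -> 'cV[R]_n) s t x :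
  0 <= phi -> e1 <= e2 -> (s <= t)%N -> qf (Bm e1 phi a s) x <= qf (Bm e2 phi a t) x.
Proof.
move=> p0 e12 st; rewrite !qf_Bm; apply: lerD.
  by apply: ler_wpM2r => //; apply: sumr_ge0 => i _; exact: sqr_ge0.
apply: ler_wpM2l => //.
rewrite [X in _ <= X](@big_cat_nat _ _ _ s.+1) //=.
by rewrite lerDl; apply: sumr_ge0 => i _; exact: sqr_ge0.
Qed.

Lemma sum_sq_pos (R : realType) n (x : 'cV[R]_n) :
  x != 0 -> 0 < \sum_i x i 0 ^+ 2.
Proof.
move=> x0; rewrite lt_def; apply/andP; split; last by apply: sumr_ge0 => i _; exact: sqr_ge0.
apply/negP => /eqP /psumr_eq0P H; move/negP: x0; apply; apply/eqP/matrixP => i j.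
rewrite (ord1 j) mxE; apply/eqP; rewrite -sqrf_eq0; apply/eqP; apply: H => // k _.
exact: sqr_ge0.
Qed.

Lemma Bm_pd (R : realType) n (e phi : R) (a : nat -> 'cV[R]_n) t :
  0 < e -> 0 <= phi -> pd (Bm e phi a t).
Proof.
move=> e0 p0 x x0; rewrite qf_Bm.
have h1 := mulr_gt0 e0 (sum_sq_pos x0).
have h2 : 0 <= phi * \sum_(1 <= tau < t.+1) ((a tau)^T *m x) 0 0 ^+ 2.
  by apply: mulr_ge0 => //; apply: sumr_ge0 => i _; exact: sqr_ge0.
lra.
Qed.

Lemma Bm_sym (R : realType) n (e phi : R) (a : nat -> 'cV[R]_n) t :
  (Bm e phi a t)^T = Bm e phi a t.
Proof.
apply/matrixP => i j; rewrite /Bm /Sm !mxE !summxE; congr (_ + _ * _).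
  by rewrite eq_sym.
by apply: eq_bigr => k _; rewrite !mxE !big_ord1 !mxE mulrC.
Qed.

Lemma Bm_unit (R : realType) n (e phi : R) (a : nat -> 'cV[R]_n) t :
  0 < e -> 0 <= phi -> Bm e phi a t \in unitmx.
Proof.
move=> e0 p0; have [d0 _] := pd_det (Bm_sym e phi a t) (Bm_pd a t e0 p0).
by rewrite unitmxE unitfE gt_eqF.
Qed.

Lemma Bm_S (R : realType) n (e phi : R) (a : nat -> 'cV[R]_n) t :
  Bm e phi a t.+1 = Bm e phi a t + phi *: (a t.+1 *m (a t.+1)^T).
Proof. by rewrite /Bm /Sm big_nat_recr //= scalerDr addrA. Qed.

Lemma ln_le_sub1 (R : realType) (y : R) : 0 < y -> ln y <= y - 1.
Proof.
move=> y0; have := @le_ln1Dx R (y - 1) ltac:(lra).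
by rewrite addrC subrK.
Qed.

Lemma one_minus_inv_le_ln (R : realType) (r : R) : 0 < r -> 1 - r^-1 <= ln r.
Proof.
move=> r0; have := @ln_le_sub1 _ r^-1 ltac:(by rewrite invr_gt0).
rewrite lnV ?posrE //; lra.
Qed.

Lemma ln_prod (R : realType) (I : Type) (r : seq I) (F : I -> R) :
  (forall i, 0 < F i) -> ln (\prod_(i <- r) F i) = \sum_(i <- r) ln (F i).
Proof.
move=> Fp; elim: r => [|x r IH]; first by rewrite !big_nil ln1.
rewrite !big_cons lnM ?IH // posrE ?Fp //.
by apply: prodr_gt0 => i _; exact: Fp.
Qed.

Lemma ell_step (R : realType) n (e phi : R) (a : nat -> 'cV[R]_n) k :
  0 < e -> 0 < phi ->
  let D0 := \det (Bm e phi a k) in let D1 := \det (Bm e phi a k.+1) in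
  [/\ 0 < D0, 0 < D1, D1 = D0 * (1 + phi * qinv (Bm e phi a k) (a k.+1))
    & D0 = D1 * (1 - phi * qinv (Bm e phi a k.+1) (a k.+1))].
Proof.
move=> e0 p0 D0 D1.
have [d0 _] := pd_det (Bm_sym e phi a k) (Bm_pd a k e0 (ltW p0)).
have [d1 _] := pd_det (Bm_sym e phi a k.+1) (Bm_pd a k.+1 e0 (ltW p0)).
split => //.
  by rewrite /D1 /D0 Bm_S det_update // Bm_unit // ltW.
rewrite /D0 /D1.
have -> : Bm e phi a k = Bm e phi a k.+1 + (- phi) *: (a k.+1 *m (a k.+1)^T).
  by rewrite Bm_S scaleNr addrK.
by rewrite det_update ?Bm_unit ?(ltW p0) // mulNr.
Qed.

Lemma ell_bound1 (R : realType) n (e phi : R) (a : nat -> 'cV[R]_n) k :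
  0 < e -> 0 < phi ->
  phi * qinv (Bm e phi a k.+1) (a k.+1) <=
    ln (\det (Bm e phi a k.+1)) - ln (\det (Bm e phi a k)).
Proof.
move=> e0 p0; have [d0 d1 _ E] := ell_step a k e0 p0.
rewrite -ln_div ?posrE //.
have := one_minus_inv_le_ln (divr_gt0 d1 d0).
rewrite invf_div {1}E mulrAC mulfV ?gt_eqF // mul1r.
by have -> : forall x : R, 1 - (1 - x) = x by move=> x; lra.
Qed.

Lemma ell_bound0 (R : realType) n (e phi c : R) (a : nat -> 'cV[R]_n) k :
  0 < e -> 0 < phi -> 0 <= phi * qinv (Bm e phi a k) (a k.+1) <= c ->
  phi * qinv (Bm e phi a k) (a k.+1) <=
    (1 + c) * (ln (\det (Bm e phi a k.+1)) - ln (\det (Bm e phi a k))).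
Proof.
move=> e0 p0 /andP[x0 xc]; have [d0 d1 E _] := ell_step a k e0 p0.
rewrite -ln_div ?posrE // {1}E mulrAC mulfV ?gt_eqF // mul1r.
set x := phi * qinv _ _ in x0 xc *.
have hx1 : 0 < 1 + x by lra.
have e1 : (1 + x) * (1 - (1 + x)^-1) = x.
  by rewrite mulrBr mulr1 mulfV ?gt_eqF //; lra.
have y1 : 0 <= 1 - (1 + x)^-1 by rewrite subr_ge0 invf_le1 //; lra.
have := one_minus_inv_le_ln hx1 => hl.
apply: (@le_trans _ _ ((1 + c) * (1 - (1 + x)^-1))).
  rewrite -{1}e1; apply: ler_wpM2r => //; lra.
apply: ler_wpM2l => //; lra.
Qed.

Lemma Bm_diag (R : realType) n (e phi : R) (a : nat -> 'cV[R]_n) t i :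
  Bm e phi a t i i = e + phi * \sum_(1 <= tau < t.+1) a tau i 0 ^+ 2.
Proof.
rewrite /Bm /Sm !mxE eqxx mulr1 summxE; congr (_ + _ * _).
by apply: eq_bigr => k _; rewrite !mxE big_ord1 !mxE expr2.
Qed.

Lemma Bm0 (R : realType) n (e phi : R) (a : nat -> 'cV[R]_n) :
  Bm e phi a 0 = e%:M.
Proof. by rewrite /Bm /Sm big_geq // scaler0 addr0 scalemx1. Qed.

Lemma logdet_bound (R : realType) n (e phi L : R) (a : nat -> 'cV[R]_n) N :
  0 < e -> 0 < phi -> (0 < n)%N ->
  (forall t, (1 <= t <= N)%N -> \sum_i a t i 0 ^+ 2 <= L ^+ 2) ->
  ln (\det (Bm e phi a N)) - ln (\det (Bm e phi a 0)) <=
    n%:R * ln (1 + phi * L ^+ 2 * N%:R / (e * n%:R)).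
Proof.
move=> e0 p0 n0 HL.
rewrite Bm0 det_scalar lnXn // -[ln e *+ n]mulr_natl.
have [dp dle] := pd_det (Bm_sym e phi a N) (Bm_pd a N e0 (ltW p0)).
set b := fun i : 'I_n => Bm e phi a N i i.
have bE : forall i, b i = e + phi * \sum_(1 <= tau < N.+1) a tau i 0 ^+ 2.
  by move=> i; rewrite /b Bm_diag.
have bpos : forall i, 0 < b i.
  move=> i; rewrite bE; have : 0 <= phi * \sum_(1 <= tau < N.+1) a tau i 0 ^+ 2.
    by apply: mulr_ge0; [exact: ltW | apply: sumr_ge0 => j _; exact: sqr_ge0].
  lra.
have n0R : 0 < n%:R :> R by rewrite ltr0n.
set m := e + phi * L ^+ 2 * N%:R / n%:R.
have m0 : 0 < m.
  rewrite /m; have : 0 <= phi * L ^+ 2 * N%:R / n%:R.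
    by apply: divr_ge0 => //; apply: mulr_ge0 => //; apply: mulr_ge0; [exact: ltW|exact: sqr_ge0].
  lra.
have h1 : ln (\det (Bm e phi a N)) <= \sum_i ln (b i).
  rewrite -ln_prod //; rewrite ler_ln ?posrE //; apply: prodr_gt0 => i _; exact: bpos.
have h2 : \sum_i ln (b i) <= \sum_(i < n) (ln m + (b i / m - 1)).
  apply: ler_sum => i _.
  have -> : ln (b i) = ln m + ln (b i / m).
    by rewrite -lnM ?posrE ?divr_gt0 // mulrC divfK ?gt_eqF.
  by rewrite lerD2l ln_le_sub1 // divr_gt0.
have h3 : \sum_i b i <= n%:R * m.
  rewrite (eq_bigr _ (fun i _ => bE i)) big_split /= sumr_const card_ord -[e *+ n]mulr_natl.
  rewrite -mulr_sumr exchange_big /= /m mulrDr; apply: lerD => //.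
  apply: (@le_trans _ _ (phi * \sum_(1 <= j < N.+1) L ^+ 2)).
    apply: ler_wpM2l; first exact: ltW.
    by apply: ler_sum_nat => j Hj; apply: HL.
  rewrite sumr_const_nat subn1 /= -[L ^+ 2 *+ N]mulr_natr.
  rewrite [X in _ <= X](_ : _ = phi * (L ^+ 2 * N%:R)) //.
  by field; rewrite gt_eqF.
have h4 : \sum_(i < n) (ln m + (b i / m - 1)) = n%:R * ln m + ((\sum_i b i) / m - n%:R).
  rewrite big_split /= sumr_const card_ord big_split /= sumr_const card_ord -mulr_suml.
  by rewrite -[ln m *+ n]mulr_natl -[(-1) *+ n]mulr_natl mulrN1.
have h5 : (\sum_i b i) / m <= n%:R by rewrite ler_pdivrMr.
have h6 : ln m - ln e = ln (1 + phi * L ^+ 2 * N%:R / (e * n%:R)).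
  rewrite -ln_div ?posrE //; congr ln; rewrite /m; field.
  by rewrite gt_eqF //= gt_eqF.
rewrite -h6; lra.
Qed.

Lemma tele_bound (R : realType) (g f : nat -> R) N :
  (forall k, (k < N)%N -> g k.+1 <= f k.+1 - f k) ->
  \sum_(1 <= t < N.+1) g t <= f N - f 0%N.
Proof.
move=> H; rewrite -(telescope_sumr f (leq0n N)) big_add1 /=.
by apply: ler_sum_nat => k /andP[_ kN]; apply: H.
Qed.

Lemma qinv_scalar (R : realType) n (e : R) (x : 'cV[R]_n) :
  qinv (e%:M) x = e^-1 * \sum_i x i 0 ^+ 2.
Proof. by rewrite /qinv invmx_scalar -scalemx1 -/(qf _ x) qfZ qf1. Qed.

Lemma dmax_ge (d : nat -> nat) N tau : (1 <= tau <= N)%N ->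
  (minn (d tau) (N - tau) <= dmaxN d N)%N.
Proof.
move=> Ht; rewrite /dmaxN.
by apply: (@leq_bigmax_seq _ _ xpredT (fun tau => minn (d tau) (N - tau))); rewrite // mem_index_iota ltnS.
Qed.

Lemma eta_ge (R : realType) (eta : nat -> R) N :
  (forall t, (t < N)%N -> eta t <= eta t.+1) -> forall t, (t <= N)%N -> eta 0%N <= eta t.
Proof.
move=> H; elim=> [|t IH] Ht //; apply: (le_trans (IH (ltnW Ht))); exact: H.
Qed.

Unset Implicit Arguments.

Theorem lemmaC1 (R : realType) (N n : nat) (phi L : R) (eta : nat -> R)
  (a : nat -> 'cV[R]_n) (d : nat -> nat) :
  (1 <= N)%N -> (1 <= n)%N -> 0 < phi -> 0 < L -> 0 < eta 0%N ->
  (forall t, (t < N)%N -> eta t <= eta t.+1) ->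
  (forall t, (1 <= t <= N)%N -> norm2 (a t) <= L) ->
  let A := Amat eta phi a in
  let D := (dmaxN d N)%:R : R in
  let lg := ln (1 + phi * L ^+ 2 * N%:R / (eta 0%N * n%:R)) in
  (\sum_(1 <= t < N.+1)
      wnorm_inv (A t.-1) (a t) * sum_mt d t (fun tau => wnorm_inv (A t.-1) (a tau))
    <= 2 * n%:R * D / phi * (phi * L ^+ 2 / eta 0%N + 1) * lg)
  /\
  (\sum_(1 <= t < N.+1)
      wnorm_inv (A t) (a t) * sum_mt d t (fun tau => wnorm_inv (A t) (a tau))
    <= 2 * n%:R * D / phi * lg).
Proof.
move=> N1 n1 p0 L0 e0 etaS HL A D lg.
set e := eta 0%N.
have etaG := eta_ge etaS.
have etaP : forall t, (t <= N)%N -> 0 < eta t by move=> t Ht; exact: lt_le_trans e0 (etaG t Ht).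
have HL2 : forall t, (1 <= t <= N)%N -> \sum_i a t i 0 ^+ 2 <= L ^+ 2.
  move=> t Ht; have := HL t Ht; rewrite /norm2 => h.
  have s0 : 0 <= \sum_i a t i 0 ^+ 2 by apply: sumr_ge0 => i _; exact: sqr_ge0.
  rewrite -(sqr_sqrtr s0); have := sqrtr_ge0 (\sum_i a t i 0 ^+ 2).
  move: h; set s := Num.sqrt _ => h hs; rewrite !expr2; exact: ler_pM.
have hD : forall tau, (1 <= tau <= N)%N -> (minn (d tau) (N - tau) <= dmaxN d N)%N.
  by move=> tau Ht; exact: dmax_ge.
have lg0 : 0 <= lg.
  rewrite /lg; apply: ln_ge0; rewrite lerDl; apply: divr_ge0.
    by apply: mulr_ge0 => //; apply: mulr_ge0; [exact: ltW | exact: sqr_ge0].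
  by apply: mulr_ge0; [exact: ltW | exact: ler0n].
have D0 : 0 <= D by exact: ler0n.
pose B := Bm e phi a.
have Bsym : forall t, (B t)^T = B t by move=> t; exact: Bm_sym.
have Bunit : forall t, B t \in unitmx by move=> t; apply: Bm_unit => //; exact: ltW.
have Bpsd : forall t y, 0 <= qf (B t) y by move=> t y; apply: pd_psd; apply: Bm_pd => //; exact: ltW.
have Aunit : forall t, (t <= N)%N -> A t \in unitmx.
  by move=> t Ht; rewrite /A Amat_E; apply: Bm_unit; [exact: etaP | exact: ltW].
have mono : forall s t x, (s <= t <= N)%N -> qinv (A t) x <= qinv (B s) x.
  move=> s t x /andP[st tN]; apply: qinv_mono => //; first exact: Aunit.
  move=> y; rewrite /A Amat_E; apply: qf_Bm_mono => //; [exact: ltW | exact: etaG].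
have qA0 : forall t x, (t <= N)%N -> 0 <= qinv (A t) x.
  move=> t x Ht; apply: qinv_ge0; first exact: Aunit.
  by move=> y; apply: pd_psd; rewrite /A Amat_E; apply: Bm_pd; [exact: etaP | exact: ltW].
have qB0 : forall t x, 0 <= qinv (B t) x by move=> t x; exact: qinv_ge0.
have wsq : forall t x, (t <= N)%N -> wnorm_inv (A t) x ^+ 2 = qinv (A t) x.
  by move=> t x Ht; rewrite /wnorm_inv sqr_sqrtr //; exact: qA0.
have LD : ln (\det (B N)) - ln (\det (B 0%N)) <= n%:R * lg.
  by rewrite /B /lg; apply: logdet_bound.
have T2 : phi * \sum_(1 <= t < N.+1) qinv (B t) (a t) <= n%:R * lg.
  apply: le_trans LD; rewrite mulr_sumr.
  apply: (tele_bound (f := fun t => ln (\det (B t)))) => k _.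
  exact: ell_bound1.
set c := phi * L ^+ 2 / e.
have c0 : 0 <= c.
  by apply: divr_ge0; [apply: mulr_ge0; [exact: ltW | exact: sqr_ge0] | exact: ltW].
have T1 : phi * \sum_(1 <= t < N.+1) qinv (B t.-1) (a t) <= (1 + c) * (n%:R * lg).
  apply: (@le_trans _ _ ((1 + c) * (ln (\det (B N)) - ln (\det (B 0%N))))); last first.
    by apply: ler_wpM2l => //; lra.
  rewrite mulr_sumr mulrBr.
  apply: (tele_bound (f := fun t => (1 + c) * ln (\det (B t)))) => k kN /=.
  rewrite -mulrBr; apply: ell_bound0 => //; apply/andP; split.
    by apply: mulr_ge0; [exact: ltW | exact: qB0].
  have : qinv (B k) (a k.+1) <= qinv (B 0%N) (a k.+1).
    apply: qinv_mono => //; move=> y; apply: qf_Bm_mono => //; exact: ltW.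
  rewrite /B Bm0 qinv_scalar => h.
  have h2 := HL2 k.+1 ltac:(lia).
  apply: (@le_trans _ _ (phi * (e^-1 * \sum_i a k.+1 i 0 ^+ 2))).
    by apply: ler_wpM2l => //; exact: ltW.
  rewrite /c mulrA -mulrA [e^-1 * _]mulrC mulrA; apply: ler_wpM2r.
    by rewrite invr_ge0; exact: ltW.
  by apply: ler_wpM2l => //; exact: ltW.
split.
  have C1 := @comb R N d (dmaxN d N) (fun t => wnorm_inv (A t.-1) (a t))
     (fun t tau => wnorm_inv (A t.-1) (a tau)) (fun t => qinv (B t.-1) (a t)) hD.
  have := C1 ltac:(move=> t Ht; split; [exact: sqrtr_ge0 | rewrite wsq; [apply: mono|]; lia])
     ltac:(move=> t tau t1 tt tN; split; [exact: sqrtr_ge0 | rewrite wsq; [apply: mono|]; lia])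
     (fun t => qB0 t.-1 (a t)).
  rewrite -/D /sum_mt => H1.
  apply: le_trans H1 _.
  set S := \sum_(1 <= t < N.+1) qinv (B t.-1) (a t) in T1 *.
  have S0 : 0 <= S by apply: sumr_ge0 => t _; exact: qB0.
  have eq : 2 * n%:R * D / phi * (phi * L ^+ 2 / eta 0%N + 1) * lg =
      2 * (D * ((1 + c) * (n%:R * lg) / phi)).
    by rewrite /c /e; field; rewrite !gt_eqF.
  rewrite eq.
  have h : S <= (1 + c) * (n%:R * lg) / phi by rewrite ler_pdivlMr // mulrC.
  have h' : D * S <= D * ((1 + c) * (n%:R * lg) / phi) by apply: ler_wpM2l.
  have h'' : 0 <= D * S by apply: mulr_ge0.
  lra.
have C2 := @comb R N d (dmaxN d N) (fun t => wnorm_inv (A t) (a t))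
   (fun t tau => wnorm_inv (A t) (a tau)) (fun t => qinv (B t) (a t)) hD.
have := C2 ltac:(move=> t Ht; split; [exact: sqrtr_ge0 | rewrite wsq; [apply: mono|]; lia])
   ltac:(move=> t tau t1 tt tN; split; [exact: sqrtr_ge0 | rewrite wsq; [apply: mono|]; lia])
   (fun t => qB0 t (a t)).
rewrite -/D /sum_mt => H2.
apply: le_trans H2 _.
set S := \sum_(1 <= t < N.+1) qinv (B t) (a t) in T2 *.
have S0 : 0 <= S by apply: sumr_ge0 => t _; exact: qB0.
have eq : 2 * n%:R * D / phi * lg = 2 * (D * (n%:R * lg / phi)).
  by field; rewrite gt_eqF.
rewrite eq.
have h : S <= n%:R * lg / phi by rewrite ler_pdivlMr // mulrC.
have h' : D * S <= D * (n%:R * lg / phi) by apply: ler_wpM2l.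
have h'' : 0 <= D * S by apply: mulr_ge0.
lra.
Qed.
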